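(* Let $C$ be a cake, $S$ a family of usable pieces, and $C_0\subseteq C_1\subseteq C$ pieces. Let $K$ be an $S$-good knife function on $C$ from $C_0$ to $C_1$. Let two agents $A,B$ have value measures $V_A,V_B$ on $C$ normalized so that $V_A(C)=V_B(C)=1$, and suppose that for each $i\in\{A,B\}$: $V_i^S(C_0)\le V_i^S(C\setminus C_0)$ and $V_i^S(C_1)\ge V_i^S(C\setminus C_1)$. Then for each $i$ there is $t_i\in[0,1]$ with $V_i^S(K(t_i))=V_i^S(C\setminus K(t_i))$; after renaming the agents so that $t_A\le t_B$, for every $t^*\in[t_A,t_B]$, giving $K(t^* )$ to $A$ and $C\setminus K(t^* )$ to $B$ yields a division in which each agent's $S$-value of his own piece is at least his $S$-value of the other piece, and each agent $i$'s $S$-value of his own piece is at least $$\max\Big(V_i^S(C_0),\ V_i^S(C\setminus C_1),\ \frac{1}{\mathrm{Loss}(K,S)}\Big).$$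
   Context: A cake is a Borel subset $C\subseteq\mathbb{R}^d$; a piece is a Borel subset of $\mathbb{R}^d$. A value measure on $C$ is $V(X)=\int_X v$ with $v$ non-negative, bounded, integrable on $C$, $V(C)<\infty$. $S$ is a family of pieces; $V^S(X):=\sup\{V(s):s\in S, s\subseteq X\}$. $\mathrm{Loss}(X,S):=\sup_V V(X)/V^S(X)$ over finite Lebesgue-absolutely-continuous measures $V$ with $V^S(X)>0$ ($\infty$ if unbounded). A knife function on $C$ is a map $K$ from $[0,1]$ to Borel subsets of $C$ with $K(t)\subseteq K(t')$ whenever $t\le t'$; it is a knife function from $C_0$ to $C_1$ if $K(0)=C_0$ and $K(1)=C_1$. Its complement is $\overline{K}(t):=C\setminus K(t)$. $K$ is $S$-good if for every finite measure $V$ absolutely continuous w.r.t. Lebesgue measure, both $t\mapsto V^S(K(t))$ and $t\mapsto V^S(\overline K(t))$ are continuous. The geometric loss of $K$ is $\mathrm{Loss}(K,S):=\sup_{t\in[0,1]}\big(\mathrm{Loss}(K(t),S)+\mathrm{Loss}(\overline K(t),S)\big)$. *)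

(* Defs.v *)
From HB Require Import structures.
From mathcomp Require Import all_boot all_order all_algebra.
From mathcomp Require Import all_classical all_reals all_analysis.

Set Implicit Arguments.
Unset Strict Implicit.
Unset Printing Implicit Defensive.

Import Order.TTheory GRing.Theory Num.Theory.
Local Open Scope classical_set_scope.
Local Open Scope ring_scope.

(* R^d is realised as the iterated product R * (R * ( ... * unit)), whose     *)
(* product sigma-algebra is the Borel sigma-algebra of R^d, and Lebesgue      *)
(* measure on it is the iterated product of the 1-dimensional Lebesgue        *)
(* measure (restricted to Borel sets).                                        *)

Fixpoint Rspace (R : realType) (d : nat) : {disp : measure_display & measurableType disp} :=
  match d with
  | O => existT (fun disp => measurableType disp) _ (unit : measurableType _)
  | S d' => existT (fun disp => measurableType disp) _ ((R * projT2 (Rspace R d'))%type : measurableType _)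
  end.

Definition Rd (R : realType) (d : nat) : measurableType (projT1 (Rspace R d)) :=
  projT2 (Rspace R d).

Fixpoint lebesgue_d (R : realType) (d : nat) : set (Rd R d) -> \bar R :=
  match d return set (Rd R d) -> \bar R with
  | O => (fun A => if `[< A tt >] then 1%E else 0%E)
  | S d' => (@lebesgue_measure R \x @lebesgue_d R d')%E
  end.

Section CakeDefs.
Variables (R : realType) (d : nat).
Local Notation T := (Rd R d).
Local Notation lam := (@lebesgue_d R d).
Local Open Scope ereal_scope.

Definition piece (X : set T) : Prop := measurable X.

Definition value_density (C : set T) (v : T -> R) : Prop :=
  (forall x, C x -> (0 <= v x)%R) /\
  (exists M : R, forall x, C x -> (v x <= M)%R) /\
  lam.-integrable C (fun x => (v x)%:E).

Definition value_measure (v : T -> R) (X : set T) : \bar R :=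
  \int[lam]_(x in X) (v x)%:E.

(* V^S(X) = sup { V(s) : s in S, s included in X }  (sup of the empty set = 0) *)
Definition VS (V : set T -> \bar R) (S : set (set T)) (X : set T) : \bar R :=
  ereal_sup ([set 0] `|` [set V s | s in [set s | S s /\ s `<=` X]]).

Definition ac_finite (V : {finite_measure set T -> \bar R}) : Prop :=
  V `<< lam.

Definition loss_ratios (X : set T) (S : set (set T)) : set (\bar R) :=
  [set r | exists V : {finite_measure set T -> \bar R},
      [/\ ac_finite V, 0 < VS V S X & r = V X * (VS V S X)^-1]].

Definition Loss (X : set T) (S : set (set T)) : \bar R :=
  if `[< exists r, loss_ratios X S r >] then ereal_sup (loss_ratios X S)
  else (if `[< lam X = 0 >] then 0 else +oo).

Definition knife_function (C C0 C1 : set T) (K : R -> set T) : Prop :=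
  (forall t, t \in `[0%R, 1%R] -> piece (K t) /\ K t `<=` C) /\
  (forall t t', t \in `[0%R, 1%R] -> t' \in `[0%R, 1%R] -> (t <= t')%R -> K t `<=` K t') /\
  K 0%R = C0 /\ K 1%R = C1.

Definition knife_compl (C : set T) (K : R -> set T) (t : R) : set T := C `\` K t.

Definition S_good (C : set T) (S : set (set T)) (K : R -> set T) : Prop :=
  forall V : {finite_measure set T -> \bar R}, ac_finite V ->
    {within `[0%R, 1%R], continuous (fun t => VS V S (K t))} /\
    {within `[0%R, 1%R], continuous (fun t => VS V S (knife_compl C K t))}.

Definition knife_loss (C : set T) (S : set (set T)) (K : R -> set T) : \bar R :=
  ereal_sup [set Loss (K t) S + Loss (knife_compl C K t) S | t in `[0%R, 1%R]].

End CakeDefs.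

(* Main.v *)
Require Import Defs.
From HB Require Import structures.
From mathcomp Require Import all_boot all_order all_algebra.
From mathcomp Require Import all_classical all_reals all_analysis.
From mathcomp Require Import measurable_realfun.
From mathcomp Require Import lra.
Import Order.TTheory GRing.Theory Num.Theory.
Import numFieldNormedType.Exports.
Local Open Scope classical_set_scope.
Local Open Scope ring_scope.
Section PM.
Variables (R : realType) (d1 d2 : measure_display) (T1 : measurableType d1) (T2 : measurableType d2).
Variables (m1 : {sigma_finite_measure set T1 -> \bar R}) (m2 : {sigma_finite_measure set T2 -> \bar R}).
Local Open Scope ereal_scope.
Definition pm := (m1 \x m2)%E.
HB.instance Definition _ := Measure.on pm.
Lemma my_psf : sigma_finite setT pm.
Proof.
have /sigma_finiteP[F [TF ndF Foo]] := sigma_finiteT m1.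
have /sigma_finiteP[G [TG ndG Goo]] := sigma_finiteT m2.
exists (fun n => F n `*` G n).
 rewrite -setXTT TF TG predeqE => -[x y]; split.
    move=> [/= [n _ Fnx] [k _ Gky]]; exists (maxn n k) => //; split.
    - by move: x Fnx; exact/subsetPset/ndF/leq_maxl.
    - by move: y Gky; exact/subsetPset/ndG/leq_maxr.
  by move=> [n _ []/= ? ?]; split; exists n.
move=> k; have [? ?] := Foo k; have [? ?] := Goo k.
split; first exact: measurableX.
by rewrite /pm product_measure1E// lte_mul_pinfty// ge0_fin_numE.
Qed.
HB.instance Definition _ := Measure_isSigmaFinite.Build _ _ _ pm my_psf.
End PM.
Section Dens.
Local Open Scope ereal_scope.
Context (dd : measure_display) (T : measurableType dd) (R : realType) (mu : {measure set T -> \bar R}) (g : T -> \bar R).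
Definition dens (mg : measurable_fun setT g) (g0 : forall x, 0 <= g x) (gfin : \int[mu]_x g x < +oo) : set T -> \bar R :=
  fun A => \int[mu]_(x in A) g x.
Variables (mg : measurable_fun setT g) (g0 : forall x, 0 <= g x) (gfin : \int[mu]_x g x < +oo).
Let d0 : dens mg g0 gfin set0 = 0. Proof. by rewrite /dens integral_set0. Qed.
Let dge0 A : 0 <= dens mg g0 gfin A. Proof. by apply: integral_ge0 => x _. Qed.
Let dsig : semi_sigma_additive (dens mg g0 gfin).
Proof. exact: semi_sigma_additive_nng_induced. Qed.
HB.instance Definition _ := isMeasure.Build _ _ _ (dens mg g0 gfin) d0 dge0 dsig.
Let dfin : fin_num_fun (dens mg g0 gfin).
Proof. by apply: lty_fin_num_fun; exact: gfin. Qed.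
HB.instance Definition _ := Measure_isFinite.Build _ _ _ (dens mg g0 gfin) dfin.
End Dens.

Section AddSc.
Local Open Scope ereal_scope.
Context (dd : measure_display) (T : measurableType dd) (R : realType).
Variables (W V : {finite_measure set T -> \bar R}) (c : {nonneg R}).
Definition addsc := measure_add W (mscale c V).
HB.instance Definition _ := Measure.on addsc.
Lemma addscE A : addsc A = W A + c%:num%:E * V A.
Proof. by rewrite /addsc measure_addE. Qed.
Let afin : fin_num_fun addsc.
Proof.
move=> U mU; rewrite addscE fin_numD fin_num_measure //=.
by rewrite fin_numM // fin_num_measure.
Qed.
HB.instance Definition _ := Measure_isFinite.Build _ _ _ addsc afin.
End AddSc.

Section X. Variables (R : realType) (d : nat) (m : {sigma_finite_measure set (Rd R d) -> \bar R}).
Definition pmR : set (Rd R d.+1) -> \bar R := (@lebesgue_measure R \x m)%E.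
Let l0 : pmR set0 = 0%E. Proof. have H := measure0 (@pm _ _ _ _ _ (@lebesgue_measure R) m). rewrite /pm in H. rewrite /pmR. exact H. Qed.
Let lge0 A : (0 <= pmR A)%E. Proof. exact: (measure_ge0 (@pm _ _ _ _ _ (@lebesgue_measure R) m)). Qed.
Let lsig : semi_sigma_additive pmR. Proof. exact: (@measure_semi_sigma_additive _ _ _ (@pm _ _ _ _ _ (@lebesgue_measure R) m)). Qed.
HB.instance Definition _ := isMeasure.Build _ _ R pmR l0 lge0 lsig.
Let lsf : sigma_finite setT pmR. Proof. exact: (sigma_finiteT (@pm _ _ _ _ _ (@lebesgue_measure R) m)). Qed.
HB.instance Definition _ := Measure_isSigmaFinite.Build _ _ R pmR lsf.
End X.
Lemma lebd_measure (R : realType) (d : nat) :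
  exists m : {sigma_finite_measure set (Rd R d) -> \bar R}, (m : set _ -> _) = @lebesgue_d R d.
Proof.
elim: d => [|d [m Hm]].
  exists (@dirac _ (Rd R 0) tt R). apply/funext => A /=.
  rewrite /dirac indicE /=. 
  by case: (boolP (tt \in A)) => H; case: asboolP => // H2; move: H; rewrite ?in_setE ?notin_setE.
exists (@pmR _ _ m).
rewrite /pmR /= -Hm. reflexivity.
Qed.

Section Cake.
Context {R : realType} {d : nat}.
Local Notation T := (Rd R d).
Local Notation lam := (@lebesgue_d R d).
Local Open Scope ereal_scope.
Implicit Types (S : set (set T)) (X Y : set T).

Lemma VS_ge0 (V : set T -> \bar R) S X : 0 <= VS V S X.
Proof. by apply: le_ereal_sup_tmp; exists 0 => //; left. Qed.

Lemma VS_mono (V : set T -> \bar R) S X Y : X `<=` Y -> VS V S X <= VS V S Y.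
Proof.
move=> XY; apply: ereal_sup_le => z [->|[s [Ss sX] <-]]; first by left.
by right; exists s => //; split => //; exact: subset_trans XY.
Qed.

Lemma VS_le (V : set T -> \bar R) S X b : 0 <= b ->
  (forall s, S s -> s `<=` X -> V s <= b) -> VS V S X <= b.
Proof. by move=> b0 H; apply: ge_ereal_sup => z [->//|[s [Ss sX] <-]]; exact: H. Qed.

Lemma VS_ge (V : set T -> \bar R) S X s : S s -> s `<=` X -> V s <= VS V S X.
Proof. by move=> Ss sX; apply: le_ereal_sup_tmp; exists (V s) => //; right; exists s. Qed.

Lemma VS_ext (V1 V2 : set T -> \bar R) S X :
  (forall s, S s -> s `<=` X -> V1 s = V2 s) -> VS V1 S X = VS V2 S X.
Proof.
move=> H; rewrite /VS; congr ereal_sup; congr (_ `|` _).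
by apply/seteqP; split => z [s [Ss sX] <-]; exists s => //; [rewrite H | rewrite -H].
Qed.

Lemma VS_fin (V : {finite_measure set T -> \bar R}) S X :
  (forall s, S s -> measurable s) -> VS V S X \is a fin_num.
Proof.
move=> HS; rewrite ge0_fin_numE ?VS_ge0 //.
apply: (@le_lt_trans _ _ (V setT)); last exact: fin_num_fun_lty (@fin_num_measure _ _ _ V).
apply: VS_le => // s Ss _; apply: le_measure => //; rewrite inE //; exact: HS.
Qed.

Lemma Loss_ge_ratio (V : {finite_measure set T -> \bar R}) S X :
  ac_finite V -> 0 < VS V S X -> V X * (VS V S X)^-1 <= Loss X S.
Proof.
move=> ac pos; rewrite /Loss.
have Hex : exists r, loss_ratios X S r by exists (V X * (VS V S X)^-1); exists V.
rewrite asboolT //; apply: le_ereal_sup_tmp; exists (V X * (VS V S X)^-1) => //.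
by exists V.
Qed.

Lemma Loss_ge0 S X : 0 <= Loss X S.
Proof.
rewrite /Loss; case: asboolP => [[r [V [ac pos rE]]]|_].
  apply: le_ereal_sup_tmp; exists r; first by exists V.
  by rewrite rE mule_ge0 // inve_ge0 ltW.
by case: asboolP.
Qed.


Lemma Loss_inf (m : {measure set T -> \bar R}) (Hm : (m : set T -> \bar R) = lam)
  (V : {finite_measure set T -> \bar R}) S X :
  (forall s, S s -> measurable s) ->
  ac_finite V -> measurable X -> 0 < V X -> VS V S X = 0 -> Loss X S = +oo.
Proof.
move=> HS ac mX VX0 VS0; rewrite /Loss; case: asboolP => [[r [W [acW posW rE]]]|Hno]; last first.
  case: asboolP => // lam0; exfalso.
  have : V.-null_set X.
    apply: ac => A mA AX; rewrite -Hm; apply/eqP; rewrite eq_le measure_ge0 andbT.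
    by rewrite -lam0 -Hm le_measure // inE.
  move=> hnull; have H : V X = 0 by apply: hnull. 
  by move: VX0; rewrite H ltxx.
set w := VS W S X in posW *.
have wfin : w \is a fin_num by exact: VS_fin.
have vfin : V X \is a fin_num by exact: fin_num_measure.
have ufin : W X \is a fin_num by exact: fin_num_measure.
suff H : forall M : R, M%:E <= ereal_sup (loss_ratios X S).
  case E: (ereal_sup _) => [z||] //.
    have := H (z + 1)%R; rewrite E lee_fin => h.
    have : (z < z + 1)%R by rewrite ltrDl ltr01.
    by rewrite ltNge h.
  by have := H 0%R; rewrite E.
move=> M.
set w' := fine w; set v := fine (V X); set u := fine (W X).
have w'0 : (0 < w')%R by rewrite -lte_fin /w' fineK.
have v0 : (0 < v)%R by rewrite -lte_fin /v fineK.
have u0 : (0 <= u)%R by rewrite -lee_fin /u fineK.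
pose c : {nonneg R} := NngNum (normr_ge0 (M * w' / v)%R).
pose V' := @addsc _ _ _ W V c.
have VS' : VS V' S X = w.
  apply: VS_ext => s Ss sX; rewrite /V' addscE.
  have -> : V s = 0.
    apply/eqP; rewrite eq_le measure_ge0 andbT -VS0; exact: VS_ge.
  by rewrite mule0 adde0.
have acV' : ac_finite V'.
  move=> N HN A mA AN. rewrite /V' /= addscE (acW N HN A mA AN) (ac N HN A mA AN).
  by rewrite mule0 adde0.
apply: le_ereal_sup_tmp; exists (V' X * (VS V' S X)^-1).
  by exists V'; split => //; rewrite VS'.
rewrite VS' /V' /= addscE -(fineK wfin) -(fineK vfin) -(fineK ufin) -/w' -/v -/u.
rewrite inver gt_eqF //. rewrite (_ : (u%:E + _) * _ = ((u + c%:num * v) / w')%:E); last by rewrite EFinM EFinD EFinM.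
rewrite lee_fin /=.
rewrite ler_pdivlMr //.
have : (M * w' <= `|M * w' / v| * v)%R.
  rewrite -[X in (_ <= _ * X)%R](gtr0_norm v0) -normrM divfK ?gt_eqF //; exact: ler_norm.
lra.
Qed.


Lemma bal_loss (m : {measure set T -> \bar R}) (Hm : (m : set T -> \bar R) = lam)
  (V : {finite_measure set T -> \bar R}) S (C : set T) (K : R -> set T) (t0 : R) :
  (forall s, S s -> measurable s) -> ac_finite V -> t0 \in `[0%R, 1%R] ->
  measurable (K t0) -> measurable (knife_compl C K t0) ->
  V (K t0) + V (knife_compl C K t0) = 1 ->
  VS V S (K t0) = VS V S (knife_compl C K t0) ->
  (VS V S (K t0))^-1 <= knife_loss C S K.
Proof.
move=> HS ac t01 mK mKc Vsum bal.
apply: (@le_trans _ _ (Loss (K t0) S + Loss (knife_compl C K t0) S)); last first.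
  by apply: le_ereal_sup_tmp; eexists; first by exists t0.
set a := VS V S (K t0) in bal *.
have a0 : 0 <= a := VS_ge0 _ _ _.
have L1 := Loss_ge0 S (K t0); have L2 := Loss_ge0 S (knife_compl C K t0).
rewrite le_eqVlt in a0; case/orP: a0 => [/eqP a0|a0].
- rewrite -a0 inve0.
  have : 0 < V (K t0) \/ 0 < V (knife_compl C K t0).
    case: (ltP 0 (V (K t0))) => h; [by left | right].
    have h0 : V (K t0) = 0 by apply/eqP; rewrite eq_le h measure_ge0.
    by move: Vsum; rewrite h0 add0e => ->; rewrite lte01.
  case => h.
  + rewrite (@Loss_inf m Hm _ _ _ HS ac mK h) ?addye //; first by rewrite gt_eqF // (lt_le_trans _ L2) // ltNy0.
  + rewrite (@Loss_inf m Hm _ _ _ HS ac mKc h) ?addey //; first by rewrite gt_eqF // (lt_le_trans _ L1) // ltNy0.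
    by rewrite -bal [RHS]a0.
- have -> : a^-1 = V (K t0) * a^-1 + V (knife_compl C K t0) * a^-1.
    by rewrite -ge0_muleDl ?Vsum ?mul1e // measure_ge0.
  apply: leeD; first exact: Loss_ge_ratio.
  rewrite bal; apply: Loss_ge_ratio => //; by rewrite -bal.
Qed.


Lemma fine_within (g : R -> \bar R) :
  {within `[0%R, 1%R], continuous (fun t => g t)} -> (forall t, g t \is a fin_num) ->
  {within `[0%R, 1%R], continuous (fun t => fine (g t))}.
Proof.
move=> H fin x; have := H x.
move=> h; apply: fine_cvg; rewrite fineK //.
Qed.

Lemma balance_exists (V : {finite_measure set T -> \bar R}) S (C : set T) (K : R -> set T) :
  (forall s, S s -> measurable s) ->
  {within `[0%R, 1%R], continuous (fun t => VS V S (K t))} ->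
  {within `[0%R, 1%R], continuous (fun t => VS V S (knife_compl C K t))} ->
  VS V S (K 0%R) <= VS V S (knife_compl C K 0%R) ->
  VS V S (knife_compl C K 1%R) <= VS V S (K 1%R) ->
  exists t, t \in `[0%R, 1%R] /\ VS V S (K t) = VS V S (knife_compl C K t).
Proof.
move=> HS c1 c2 h0 h1.
have fin := fun X => VS_fin V S X HS.
pose f := fun t => (fine (VS V S (K t)) - fine (VS V S (knife_compl C K t)))%R.
have cf : {within `[0%R, 1%R], continuous f}.
  move=> x; apply: cvgB; [have := @fine_within _ c1 (fun t => fin (K t)) x | have := @fine_within _ c2 (fun t => fin (knife_compl C K t)) x]; exact.
have hv : (Num.min (f 0) (f 1) <= 0 <= Num.max (f 0) (f 1))%R.
  rewrite ge_min le_max; apply/andP; split; [apply/orP; left | apply/orP; right];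
    rewrite /f ?subr_le0 ?subr_ge0; apply: fine_le; rewrite ?fin //.
have [c c01 fc] := @IVT R f 0 1 0 ler01 cf hv.
exists c; split => //.
move: fc; rewrite /f => /eqP; rewrite subr_eq0 => /eqP h.
by rewrite -(fineK (fin (K c))) h fineK.
Qed.


Lemma mk_dens (m : {measure set T -> \bar R}) (Hm : (m : set T -> \bar R) = lam)
  (C : set T) (v : T -> R) : measurable C -> value_density C v -> value_measure v C = 1 ->
  exists V : {finite_measure set T -> \bar R},
    ac_finite V /\ (forall X, X `<=` C -> V X = value_measure v X).
Proof.
move=> mC [v0 [_ intv]] vC.
rewrite -Hm in intv; rewrite /value_measure -Hm in vC.
pose g := (fun x => (v x)%:E) \_ C.
have intg : m.-integrable setT g := (integrable_mkcond _ mC).1 intv.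
have mg : measurable_fun setT g := measurable_int _ intg.
have g0 : forall x, 0 <= g x.
  by move=> x; rewrite /g /patch; case: ifP => // /set_mem Cx; rewrite lee_fin v0.
have gfin : \int[m]_x g x < +oo by rewrite /g -integral_mkcond vC ltry.
exists (@dens _ _ _ m g mg g0 gfin); split.
- move=> N HN A mA AN; rewrite /dens /=; apply: null_set_integral => //.
    exact: measurable_funTS.
  by have := HN A mA AN; rewrite -Hm.
- move=> X XC; rewrite /dens /value_measure -Hm /=; apply: eq_integral => x /set_mem Xx.
  by rewrite /g /patch mem_set //; exact: XC.
Qed.


Lemma split_one (V : {finite_measure set T -> \bar R}) (C Y : set T) :
  measurable Y -> measurable C -> Y `<=` C -> V Y + V (C `\` Y) = V C.
Proof.
move=> mY mC YC; rewrite -measureU //; first by rewrite setDUK.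
- exact: measurableD.
- by apply/seteqP; split => x // [? []].
Qed.

Section Sat.
Context {V : set T -> \bar R} {S : set (set T)} {C C0 C1 : set T} {K : R -> set T}.
Hypothesis Kmono : forall t t', t \in `[0%R, 1%R] -> t' \in `[0%R, 1%R] -> (t <= t')%R -> K t `<=` K t'.
Hypothesis K0 : K 0%R = C0.
Hypothesis K1 : K 1%R = C1.

Let i0 : (0%R:R) \in `[0%R, 1%R]. Proof. by rewrite in_itv /= lexx ler01. Qed.
Let i1 : (1%R:R) \in `[0%R, 1%R]. Proof. by rewrite in_itv /= lexx ler01. Qed.

Let cmono t t' : t \in `[0%R, 1%R] -> t' \in `[0%R, 1%R] -> (t <= t')%R ->
  knife_compl C K t' `<=` knife_compl C K t.
Proof. move=> ht ht' tt' x [Cx nK]; split => // Kx. by apply: nK; exact: (Kmono _ _ ht ht' tt' x Kx). Qed.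

Let ge0 (t : R) : t \in `[0%R, 1%R] -> (0 <= t)%R. Proof. by rewrite in_itv /= => /andP[]. Qed.
Let le1 (t : R) : t \in `[0%R, 1%R] -> (t <= 1)%R. Proof. by rewrite in_itv /= => /andP[]. Qed.

Lemma satK (t1 ts : R) (l : \bar R) : t1 \in `[0%R, 1%R] -> ts \in `[0%R, 1%R] -> (t1 <= ts)%R ->
  VS V S (K t1) = VS V S (knife_compl C K t1) -> l <= VS V S (K t1) ->
  [/\ VS V S (K ts) >= VS V S (knife_compl C K ts), VS V S (K ts) >= VS V S C0,
      VS V S (K ts) >= VS V S (C `\` C1) & VS V S (K ts) >= l].
Proof.
move=> h1 hs t1s bal hl.
have hK : VS V S (K t1) <= VS V S (K ts) by apply: VS_mono; exact: Kmono.
have hc : VS V S (knife_compl C K ts) <= VS V S (knife_compl C K t1) by apply: VS_mono; exact: cmono.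
have H1 : VS V S (knife_compl C K ts) <= VS V S (K ts) by rewrite (le_trans hc) // -bal.
split => //.
- by rewrite -K0; apply: VS_mono; apply: Kmono => //; exact: ge0.
- apply: le_trans H1; rewrite -K1; apply: VS_mono; apply: cmono => //; exact: le1.
- exact: le_trans hK.
Qed.

Lemma satC (t2 ts : R) (l : \bar R) : t2 \in `[0%R, 1%R] -> ts \in `[0%R, 1%R] -> (ts <= t2)%R ->
  VS V S (K t2) = VS V S (knife_compl C K t2) -> l <= VS V S (K t2) ->
  [/\ VS V S (knife_compl C K ts) >= VS V S (K ts), VS V S (knife_compl C K ts) >= VS V S C0,
      VS V S (knife_compl C K ts) >= VS V S (C `\` C1) & VS V S (knife_compl C K ts) >= l].
Proof.
move=> h2 hs ts2 bal hl.
have hK : VS V S (K ts) <= VS V S (K t2) by apply: VS_mono; exact: Kmono.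
have hc : VS V S (knife_compl C K t2) <= VS V S (knife_compl C K ts) by apply: VS_mono; exact: cmono.
have H1 : VS V S (K ts) <= VS V S (knife_compl C K ts) by rewrite (le_trans hK) // bal.
split => //.
- apply: le_trans H1; rewrite -K0; apply: VS_mono; apply: Kmono => //; exact: ge0.
- rewrite -K1; apply: VS_mono; apply: cmono => //; exact: le1.
- by apply: le_trans hc; rewrite -bal.
Qed.
End Sat.

End Cake.

Theorem mainTheorem3 (R : realType) (d : nat)
  (C : set (Rd R d)) (S : set (set (Rd R d))) (C0 C1 : set (Rd R d))
  (K : R -> set (Rd R d)) (vA vB : Rd R d -> R) :
  piece C ->
  (forall s, S s -> piece s) ->
  piece C0 -> piece C1 -> C0 `<=` C1 -> C1 `<=` C ->
  knife_function C C0 C1 K ->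
  S_good C S K ->
  value_density C vA -> value_density C vB ->
  value_measure vA C = 1%E -> value_measure vB C = 1%E ->
  (VS (value_measure vA) S C0 <= VS (value_measure vA) S (C `\` C0))%E ->
  (VS (value_measure vA) S C1 >= VS (value_measure vA) S (C `\` C1))%E ->
  (VS (value_measure vB) S C0 <= VS (value_measure vB) S (C `\` C0))%E ->
  (VS (value_measure vB) S C1 >= VS (value_measure vB) S (C `\` C1))%E ->
  let VAS := VS (value_measure vA) S in
  let VBS := VS (value_measure vB) S in
  let L := knife_loss C S K in
  (* agent i with S-value function ViS is satisfied with own piece P vs other piece Q *)
  let satisfied (ViS : set (Rd R d) -> \bar R) (P Q : set (Rd R d)) :=
    [/\ (ViS P >= ViS Q)%E, (ViS P >= ViS C0)%E, (ViS P >= ViS (C `\` C1))%E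
      & (ViS P >= L^-1)%E] in
  (* existence of balancing points *)
  (exists tA, tA \in `[0, 1] /\ VAS (K tA) = VAS (knife_compl C K tA)) /\
  (exists tB, tB \in `[0, 1] /\ VBS (K tB) = VBS (knife_compl C K tB)) /\
  (* for any balancing points, the agent with the smaller one gets K ts *)
  (forall tA tB, tA \in `[0, 1] -> tB \in `[0, 1] ->
     VAS (K tA) = VAS (knife_compl C K tA) ->
     VBS (K tB) = VBS (knife_compl C K tB) ->
     (tA <= tB -> forall ts, ts \in `[tA, tB] ->
        satisfied VAS (K ts) (knife_compl C K ts) /\
        satisfied VBS (knife_compl C K ts) (K ts)) /\
     (tB <= tA -> forall ts, ts \in `[tB, tA] ->
        satisfied VBS (K ts) (knife_compl C K ts) /\
        satisfied VAS (knife_compl C K ts) (K ts))).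
Proof.
move=> mC HS mC0 mC1 C0C1 C1C [Kpc [Kmono [K0 K1]]] Sg dA dB vA1 vB1 hA0 hA1 hB0 hB1 VAS VBS L sat.
have [m Hm] := lebd_measure R d.
have i0 : (0%R:R) \in `[0%R, 1%R] by rewrite in_itv /= lexx ler01.
have i1 : (1%R:R) \in `[0%R, 1%R] by rewrite in_itv /= lexx ler01.
have Ksub t : t \in `[0%R, 1%R] -> K t `<=` C by move=> h; exact: (Kpc t h).2.
have Kmeas t : t \in `[0%R, 1%R] -> measurable (K t) by move=> h; exact: (Kpc t h).1.
have Kcsub t : knife_compl C K t `<=` C by move=> x [].
have Kcmeas t : t \in `[0%R, 1%R] -> measurable (knife_compl C K t).
  by move=> h; apply: measurableD => //; exact: Kmeas.
have agent : forall v, value_density C v -> value_measure v C = 1%E ->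
   (VS (value_measure v) S C0 <= VS (value_measure v) S (C `\` C0))%E ->
   (VS (value_measure v) S (C `\` C1) <= VS (value_measure v) S C1)%E ->
   (exists t, t \in `[0%R, 1%R] /\ VS (value_measure v) S (K t) = VS (value_measure v) S (knife_compl C K t)) /\
   (forall t, t \in `[0%R, 1%R] -> VS (value_measure v) S (K t) = VS (value_measure v) S (knife_compl C K t) ->
      (L^-1 <= VS (value_measure v) S (K t))%E).
  move=> v dv v1 h0 h1.
  have [V [acV eqV]] := @mk_dens R d m Hm C v mC dv v1.
  have eqVS X : X `<=` C -> VS V S X = VS (value_measure v) S X.
    by move=> XC; apply: VS_ext => s _ sX; apply: eqV; exact: subset_trans XC.
  split.
  - have [c1 c2] := Sg V acV.
    have [||t [ht bal]] := @balance_exists R d V S C K HS c1 c2.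
    + rewrite !eqVS //; first by rewrite /knife_compl K0.
      by rewrite K0; exact: subset_trans C0C1 C1C.
    + rewrite !eqVS //; first by rewrite /knife_compl K1.
      by rewrite K1.
    by exists t; split => //; rewrite -!eqVS //; exact: Ksub.
  - move=> t ht bal.
    have Vsum : (V (K t) + V (knife_compl C K t))%E = 1%E.
      by rewrite split_one //; [rewrite eqV | exact: Kmeas | exact: Ksub].
    have := @bal_loss R d m Hm V S C K t HS acV ht (Kmeas t ht) (Kcmeas t ht) Vsum.
    rewrite !eqVS //; last exact: Ksub.
    move=> /(_ bal) h.
    have a0 : (0 <= VS (value_measure v) S (K t))%E := VS_ge0 _ _ _.
    have L0 : (0 <= L)%E by apply: le_trans h; rewrite inve_ge0.
    by rewrite inve_ple // in h.
have [exA lA] := agent vA dA vA1 hA0 hA1.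
have [exB lB] := agent vB dB vB1 hB0 hB1.
split; first exact: exA.
split; first exact: exB.
move=> tA tB hA hB balA balB.
have lA' := lA tA hA balA.
have lB' := lB tB hB balB.
have g0 (t : R) : t \in `[0%R, 1%R] -> (0 <= t)%R by rewrite in_itv /= => /andP[].
have g1 (t : R) : t \in `[0%R, 1%R] -> (t <= 1)%R by rewrite in_itv /= => /andP[].
split => [tAB ts hts | tBA ts hts].
- move: hts; rewrite in_itv /= => /andP[h1 h2].
  have hs : ts \in `[0%R, 1%R].
    by have := g0 _ hA; have := g1 _ hB; move=> ? ?; rewrite in_itv /=; apply/andP; split; lra.
  split.
  + exact: (satK Kmono K0 K1 _ _ _ hA hs h1 balA lA').
  + exact: (satC Kmono K0 K1 _ _ _ hB hs h2 balB lB').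
- move: hts; rewrite in_itv /= => /andP[h1 h2].
  have hs : ts \in `[0%R, 1%R].
    by have := g0 _ hB; have := g1 _ hA; move=> ? ?; rewrite in_itv /=; apply/andP; split; lra.
  split.
  + exact: (satK Kmono K0 K1 _ _ _ hB hs h1 balB lB').
  + exact: (satC Kmono K0 K1 _ _ _ hA hs h2 balA lA').
Qed.
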